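(* Let $(Z,S)$ be an aperiodic zero-dimensional topological dynamical system. For every positive integer $N$ there exist a clopen set $B\subset Z$, a continuous function $h:B\to R_N=\{N+1,\ldots,2N+1\}$ and a homeomorphism $T_B:B\to B$ such that $(Z,S)$ is isomorphic (as a dynamical system, i.e. via an equivariant homeomorphism) to the special topological dynamical system $(Q_N,T')$ induced by $(B,T_B,h)$.
   Context: A t.d.s. is a compact metric space with a homeomorphism; aperiodic means no periodic points; zero-dimensional means clopen sets form a basis. Special t.d.s.: given a zero-dimensional compact metric space $B$, a homeomorphism $T_B:B\to B$ and a continuous $h:B\to\mathbb{Z}_{\ge0}$, let $Q=\{(b,z): b\in B,\ 0\le z<h(b)\}\subset B\times\mathbb{Z}_{\ge0}$ and $T'(b,z)=(b,z+1)$ if $z+1<h(b)$, $T'(b,z)=(T_B(b),0)$ if $z+1=h(b)$. $(Q,T')$ is the special t.d.s. induced by $(B,T_B,h)$. *)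

(* Defs.v *)
From Stdlib Require Import Reals Lra Lia List Arith.
Open Scope R_scope.

Definition is_metric {X : Type} (d : X -> X -> R) : Prop :=
  (forall x y, 0 <= d x y) /\
  (forall x y, d x y = 0 <-> x = y) /\
  (forall x y, d x y = d y x) /\
  (forall x y z, d x z <= d x y + d y z).

Definition open_set {X : Type} (d : X -> X -> R) (U : X -> Prop) : Prop :=
  forall x, U x -> exists r, 0 < r /\ forall y, d x y < r -> U y.

Definition closed_set {X : Type} (d : X -> X -> R) (C : X -> Prop) : Prop :=
  open_set d (fun x => ~ C x).

Definition clopen {X : Type} (d : X -> X -> R) (C : X -> Prop) : Prop :=
  open_set d C /\ closed_set d C.

Definition compact_space {X : Type} (d : X -> X -> R) : Prop :=
  forall (I : Type) (U : I -> X -> Prop),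
    (forall i, open_set d (U i)) ->
    (forall x, exists i, U i x) ->
    exists l : list I, forall x, exists i, In i l /\ U i x.

Definition zero_dimensional {X : Type} (d : X -> X -> R) : Prop :=
  forall (U : X -> Prop) x, open_set d U -> U x ->
    exists C, clopen d C /\ C x /\ forall y, C y -> U y.

Definition continuous_map {X Y : Type} (dX : X -> X -> R) (dY : Y -> Y -> R)
  (f : X -> Y) : Prop :=
  forall x eps, 0 < eps -> exists delta, 0 < delta /\
    forall x', dX x x' < delta -> dY (f x) (f x') < eps.

Definition homeomorphism {X Y : Type} (dX : X -> X -> R) (dY : Y -> Y -> R)
  (f : X -> Y) : Prop :=
  continuous_map dX dY f /\
  exists g : Y -> X, continuous_map dY dX g /\
    (forall x, g (f x) = x) /\ (forall y, f (g y) = y).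

Definition aperiodic {X : Type} (S : X -> X) : Prop :=
  forall x (n : nat), (0 < n)%nat -> Nat.iter n S x <> x.

Definition sub_dist {X : Type} (d : X -> X -> R) (B : X -> Prop)
  (a b : {x : X | B x}) : R := d (proj1_sig a) (proj1_sig b).

(* The metric inherited by Z_{>=0} from R is discrete; we use the discrete
   metric, which induces the same topology. *)
Definition dnat (m n : nat) : R := if Nat.eq_dec m n then 0 else 1.

Section Special.
Context {Z : Type} (B : Z -> Prop).
Let BT := {x : Z | B x}.
Context (TB : BT -> BT) (h : BT -> nat).

Definition Qspace : Type := {p : BT * nat | (snd p < h (fst p))%nat}.

Definition Qdist (d : Z -> Z -> R) (p q : Qspace) : R :=
  sub_dist d B (fst (proj1_sig p)) (fst (proj1_sig q)) +
  dnat (snd (proj1_sig p)) (snd (proj1_sig q)).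

Definition specialT (hpos : forall b, (0 < h b)%nat) (p : Qspace) : Qspace :=
  match p with
  | exist _ (b, z) _ =>
      match Compare_dec.lt_dec (S z) (h b) with
      | left H => exist _ (b, S z) H
      | right _ => exist (fun p : BT * nat => (snd p < h (fst p))%nat)
                         (TB b, 0%nat) (hpos (TB b))
      end
  end.
End Special.

Lemma range_pos {X : Type} (h : X -> nat) (N : nat) :
  (forall b, (N + 1 <= h b <= 2 * N + 1)%nat) -> forall b, (0 < h b)%nat.
Proof. intros H b; specialize (H b); lia. Qed.

(* Main.v *)
From Stdlib Require Import Reals Lra Lia List Arith Classical ClassicalEpsilon ProofIrrelevance.
Require Import Defs.
Open Scope R_scope.

Section Gen.
Context {X : Type} (d : X -> X -> R).

Lemma open_ext (P Q : X -> Prop) : (forall x, P x <-> Q x) -> open_set d P -> open_set d Q.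
Proof.
  intros E H x Qx. destruct (H x (proj2 (E x) Qx)) as [r [rp Hr]].
  exists r; split; auto. intros y Hy; apply E; auto.
Qed.

Lemma open_const (A : Prop) : open_set d (fun _ => A).
Proof. intros x Hx; exists 1; split; [lra | auto]. Qed.

Lemma open_and (P Q : X -> Prop) : open_set d P -> open_set d Q -> open_set d (fun x => P x /\ Q x).
Proof.
  intros HP HQ x [Px Qx]. destruct (HP x Px) as [r1 [r1p H1]]. destruct (HQ x Qx) as [r2 [r2p H2]].
  exists (Rmin r1 r2); split. apply Rmin_glb_lt; auto.
  intros y Hy; split; [apply H1 | apply H2]; eapply Rlt_le_trans; eauto; [apply Rmin_l | apply Rmin_r].
Qed.

Lemma open_or (P Q : X -> Prop) : open_set d P -> open_set d Q -> open_set d (fun x => P x \/ Q x).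
Proof.
  intros HP HQ x [Px|Qx].
  - destruct (HP x Px) as [r [rp H]]; exists r; split; auto.
  - destruct (HQ x Qx) as [r [rp H]]; exists r; split; auto.
Qed.

Lemma open_exists {I : Type} (Q : I -> Prop) (P : I -> X -> Prop) :
  (forall i, open_set d (P i)) -> open_set d (fun x => exists i, Q i /\ P i x).
Proof.
  intros HP x [i [Qi Pi]]. destruct (HP i x Pi) as [r [rp H]]. exists r; split; auto.
  intros y Hy; exists i; auto.
Qed.

Lemma open_impl (A : Prop) (P : X -> Prop) : (A -> open_set d P) -> open_set d (fun x => A -> P x).
Proof.
  intros H. destruct (classic A) as [a|na].
  - eapply open_ext; [|apply (H a)]. intros x; split; auto.
  - eapply open_ext; [|apply (open_const True)]. intros x; split; tauto.
Qed.

Lemma open_forall_lt (n : nat) (P : nat -> X -> Prop) :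
  (forall j, open_set d (P j)) -> open_set d (fun x => forall j, (j < n)%nat -> P j x).
Proof.
  intros HP. induction n.
  - eapply open_ext; [|apply (open_const True)]. intros x; split; auto; intros; lia.
  - eapply open_ext; [|apply (open_and _ _ IHn (HP n))].
    intros x; split.
    + intros [H1 H2] j Hj. destruct (Nat.eq_dec j n); [subst; auto | apply H1; lia].
    + intros H; split; auto.
Qed.

Lemma clopen_not (C : X -> Prop) : clopen d C -> clopen d (fun x => ~ C x).
Proof.
  intros [H1 H2]; split; auto. unfold closed_set. eapply open_ext; [|apply H1].
  intros x; split; [tauto | apply NNPP].
Qed.

End Gen.

Lemma open_preimage {X Y : Type} (dX : X -> X -> R) (dY : Y -> Y -> R) (f : X -> Y) (U : Y -> Prop) :
  continuous_map dX dY f -> open_set dY U -> open_set dX (fun x => U (f x)).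
Proof.
  intros Hf HU x Ux. destruct (HU _ Ux) as [r [rp Hr]]. destruct (Hf x r rp) as [e [ep He]].
  exists e; split; auto.
Qed.

Lemma cont_comp {X Y W : Type} (dX : X -> X -> R) (dY : Y -> Y -> R) (dW : W -> W -> R)
  (f : X -> Y) (g : Y -> W) :
  continuous_map dX dY f -> continuous_map dY dW g -> continuous_map dX dW (fun x => g (f x)).
Proof.
  intros Hf Hg x e ep. destruct (Hg (f x) e ep) as [e1 [e1p H1]].
  destruct (Hf x e1 e1p) as [e2 [e2p H2]]. exists e2; split; auto.
Qed.

Lemma cont_id {X : Type} (d : X -> X -> R) : continuous_map d d (fun x => x).
Proof. intros x e ep; exists e; split; auto. Qed.

Lemma cont_iter {X : Type} (d : X -> X -> R) (f : X -> X) :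
  continuous_map d d f -> forall n, continuous_map d d (Nat.iter n f).
Proof.
  intros Hf n; induction n; simpl.
  - apply cont_id.
  - apply (cont_comp d d d (Nat.iter n f) f); auto.
Qed.

Lemma ball_open {X : Type} (d : X -> X -> R) (Hd : is_metric d) x r :
  open_set d (fun y => d x y < r).
Proof.
  destruct Hd as [H0 [H1 [H2 H3]]].
  intros y Hy. exists (r - d x y); split; [lra|]. intros z Hz.
  specialize (H3 x y z). lra.
Qed.

Lemma sig_eq {A : Type} (P : A -> Prop) (a b : {x | P x}) : proj1_sig a = proj1_sig b -> a = b.
Proof. destruct a, b; simpl; intros; subst; f_equal; apply proof_irrelevance. Qed.

Lemma least_ex (P : nat -> Prop) : (exists n, P n) -> exists n, P n /\ forall m, (m < n)%nat -> ~ P m.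
Proof.
  intros [n Hn]. revert Hn. induction n as [n IH] using lt_wf_ind. intros Hn.
  destruct (classic (exists m, (m < n)%nat /\ P m)) as [[m [Hm Pm]]|H].
  - apply (IH m Hm Pm).
  - exists n; split; auto. intros m Hm Pm; apply H; eauto.
Qed.

Lemma least_unique (P : nat -> Prop) n n' : P n -> (forall m, (m < n)%nat -> ~ P m) ->
  P n' -> (forall m, (m < n')%nat -> ~ P m) -> n = n'.
Proof.
  intros H1 H2 H3 H4. destruct (Nat.lt_trichotomy n n') as [h|[h|h]]; auto.
  - exfalso; apply (H4 n h H1).
  - exfalso; apply (H2 n' h H3).
Qed.

Lemma iter_add {X : Type} (f : X -> X) a b x : Nat.iter (a + b) f x = Nat.iter a f (Nat.iter b f x).
Proof. induction a; simpl; auto. rewrite IHa; auto. Qed.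

Section Dyn.
Context {Z : Type} (d : Z -> Z -> R) (Hd : is_metric d) (Hzd : zero_dimensional d)
  (T g : Z -> Z) (HSc : continuous_map d d T) (Hgc : continuous_map d d g)
  (Hgs : forall x, g (T x) = x) (Hsg : forall x, T (g x) = x)
  (Hap : aperiodic T) (N : nat) (HN : (0 < N)%nat).

Definition Sn n := Nat.iter n T.
Definition gn n := Nat.iter n g.

Lemma Sn_cont n : continuous_map d d (Sn n).
Proof. apply cont_iter; auto. Qed.
Lemma gn_cont n : continuous_map d d (gn n).
Proof. apply cont_iter; auto. Qed.

Lemma Sn_add a b x : Sn (a + b) x = Sn a (Sn b x).
Proof. apply iter_add. Qed.
Lemma gn_add a b x : gn (a + b) x = gn a (gn b x).
Proof. apply iter_add. Qed.

Lemma Sg n x : Sn n (gn n x) = x.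
Proof.
  revert x; induction n; intros x; unfold Sn, gn in *; [reflexivity|].
  rewrite (Nat.iter_succ_r n _ g). simpl. rewrite IHn. apply Hsg.
Qed.
Lemma gS n x : gn n (Sn n x) = x.
Proof.
  revert x; induction n; intros x; unfold Sn, gn in *; [reflexivity|].
  rewrite (Nat.iter_succ_r n _ T). simpl. rewrite IHn. apply Hgs.
Qed.

Lemma Sg_le a b x : (a <= b)%nat -> Sn a (gn b x) = gn (b - a) x.
Proof.
  intros H. replace b with (a + (b - a))%nat at 1 by lia. rewrite gn_add. apply Sg.
Qed.
Lemma gS_le a b x : (a <= b)%nat -> gn a (Sn b x) = Sn (b - a) x.
Proof.
  intros H. replace b with (a + (b - a))%nat at 1 by lia. rewrite Sn_add. apply gS.
Qed.

Definition sep (B : Z -> Prop) := forall y, B y -> forall m, (1 <= m <= N)%nat -> ~ B (Sn m y).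
Definition near (B : Z -> Prop) x := exists j, (j < N + 1)%nat /\ (B (Sn j x) \/ B (gn j x)).

Lemma near_clopen B : clopen d B -> clopen d (near B).
Proof.
  intros [HB1 HB2]; split.
  - apply open_exists. intros j. apply open_or.
    apply (open_preimage d d (Sn j) B); auto; apply Sn_cont.
    apply (open_preimage d d (gn j) B); auto; apply gn_cont.
  - unfold closed_set. eapply open_ext.
    2:{ apply (open_forall_lt d (N+1) (fun j x => ~ B (Sn j x) /\ ~ B (gn j x))).
        intros j; apply open_and.
        apply (open_preimage d d (Sn j) (fun y => ~ B y)); auto; apply Sn_cont.
        apply (open_preimage d d (gn j) (fun y => ~ B y)); auto; apply gn_cont. }
    intros x; unfold near; split.
    + intros H [j [Hj [h1|h1]]]; destruct (H j Hj); auto.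
    + intros H j Hj; split; intro; apply H; exists j; auto.
Qed.

Lemma U_exists x : exists U, clopen d U /\ U x /\ sep U.
Proof.
  pose proof Hd as [H0 [H1 [H2 H3]]].
  assert (forall M, exists r, 0 < r /\ forall y, d x y < r -> forall m, (1 <= m <= M)%nat -> r <= d x (Sn m y)).
  { induction M.
    - exists 1; split; [lra|]. intros; lia.
    - destruct IHM as [r [rp Hr]].
      assert (dp : 0 < d x (Sn (S M) x)).
      { destruct (H0 x (Sn (S M) x)) as [h|h]; auto. exfalso.
        apply (Hap x (S M)); [lia|]. symmetry. apply H1. auto. }
      set (de := d x (Sn (S M) x)) in *.
      destruct (Sn_cont (S M) x (de/2)) as [eta [etap Heta]]; [lra|].
      exists (Rmin r (Rmin (de/2) eta)); split.
      { repeat apply Rmin_glb_lt; lra. }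
      intros y Hy m Hm.
      assert (Hr1 := Rmin_l r (Rmin (de/2) eta)).
      assert (Hr2 := Rmin_r r (Rmin (de/2) eta)).
      assert (Hr3 := Rmin_l (de/2) eta). assert (Hr4 := Rmin_r (de/2) eta).
      destruct (Nat.eq_dec m (S M)).
      + subst m. specialize (Heta y ltac:(lra)).
        specialize (H3 x (Sn (S M) y) (Sn (S M) x)). rewrite (H2 (Sn (S M) y)) in H3. fold de in H3. lra.
      + specialize (Hr y ltac:(lra) m ltac:(lia)). lra. }
  destruct (H N) as [r [rp Hr]].
  destruct (Hzd (fun y => d x y < r) x) as [C [HC [Cx HCV]]].
  - apply ball_open; auto.
  - destruct (H1 x x) as [_ e]; rewrite e; auto.
  - exists C; split; [|split]; auto.
    intros y Cy m Hm CS. pose proof HCV as HCV0. specialize (HCV _ CS). specialize (Hr y (HCV0 y Cy) m Hm). lra.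
Qed.

Definition step (B U : Z -> Prop) : Z -> Prop := fun y => B y \/ (U y /\ ~ near B y).
Definition Bl (L : list (Z -> Prop)) : Z -> Prop := fold_right (fun U B => step B U) (fun _ => False) L.

Lemma near_mono (B B' : Z -> Prop) : (forall y, B y -> B' y) -> forall x, near B x -> near B' x.
Proof. intros H x [j [Hj [h|h]]]; exists j; split; auto. Qed.

Lemma Bl_props L : (forall U, In U L -> clopen d U /\ sep U) ->
  clopen d (Bl L) /\ sep (Bl L) /\ forall U, In U L -> forall x, U x -> near (Bl L) x.
Proof.
  induction L as [|U L IH]; intros HL.
  - simpl. split; [|split].
    + split. apply open_const. unfold closed_set. eapply open_ext; [|apply (open_const d True)]. tauto.
    + intros y [].
    + intros U [].
  - destruct IH as [C1 [S1 N1]]. { intros V HV; apply HL; simpl; auto. }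
    destruct (HL U (or_introl eq_refl)) as [CU SU].
    assert (Hsub : forall y, Bl L y -> Bl (U :: L) y). { intros y hy; simpl; left; auto. }
    simpl. fold (Bl L). split; [|split].
    + pose proof (clopen_not d _ (near_clopen _ C1)) as Cn. pose proof (clopen_not d _ C1) as CB.
      pose proof (clopen_not d _ CU) as CUn.
      split.
      * apply open_or. apply C1. apply open_and. apply CU. apply Cn.
      * unfold closed_set. eapply open_ext.
        2:{ apply (open_and d _ _ (proj1 CB) (open_or d _ _ (proj1 CUn) (proj1 (near_clopen _ C1)))). }
        intros x. unfold step. split.
        -- intros [h1 [h2|h2]] [h3|[h3 h4]]; tauto.
        -- intros H. split. tauto. destruct (classic (near (Bl L) x)); tauto.
    + intros y Hy m Hm HS. unfold step in Hy, HS.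
      destruct Hy as [Hy|[Uy Ny]]; destruct HS as [HS|[US NS]].
      * apply (S1 y Hy m Hm HS).
      * apply NS. exists m; split; [lia|]. right. rewrite gS. auto.
      * apply Ny. exists m; split; [lia|]. left; auto.
      * apply (SU y Uy m Hm US).
    + intros V [HV|HV] x Vx.
      * subst V. destruct (classic (near (Bl L) x)) as [h|h].
        -- apply (near_mono (Bl L)); auto.
        -- exists 0%nat; split; [lia|]. left. simpl. right; auto.
      * apply (near_mono (Bl L)); auto. apply (N1 V HV x Vx).
Qed.

Lemma marker (Hc : compact_space d) : exists B, clopen d B /\ sep B /\ forall x, near B x.
Proof.
  set (I := {U : Z -> Prop | clopen d U /\ sep U}).
  destruct (Hc I (fun i => proj1_sig i)) as [l Hl].
  - intros i. apply (proj1 (proj1 (proj2_sig i))).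
  - intros x. destruct (U_exists x) as [U [CU [Ux SU]]].
    exists (exist _ U (conj CU SU)); simpl; auto.
  - set (L := map (fun i : I => proj1_sig i) l).
    destruct (Bl_props L) as [C1 [S1 N1]].
    { intros U HU. unfold L in HU. apply in_map_iff in HU. destruct HU as [[V HV] [<- _]]; simpl; auto. }
    exists (Bl L); split; [|split]; auto.
    intros x. destruct (Hl x) as [i [Hi Ui]]. apply (N1 (proj1_sig i)); auto.
    unfold L; apply in_map; auto.
Qed.

Section Tower.
Context (B : Z -> Prop) (HBc : clopen d B) (HBs : sep B) (HBn : forall x, near B x).

Lemma fwd z : exists m, (1 <= m <= 2 * N + 1)%nat /\ B (Sn m z).
Proof.
  destruct (HBn (Sn (N + 1) z)) as [j [Hj [h|h]]].
  - exists (j + (N + 1))%nat; split; [lia|]. rewrite Sn_add; auto.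
  - exists (N + 1 - j)%nat; split; [lia|]. rewrite gS_le in h; auto; lia.
Qed.

Lemma bwd z : exists k, B (gn k z).
Proof.
  destruct (HBn (gn N z)) as [j [Hj [h|h]]].
  - exists (N - j)%nat. rewrite Sg_le in h; auto; lia.
  - exists (j + N)%nat. rewrite gn_add; auto.
Qed.

Definition BT := {x : Z | B x}.
Definition hP (b : BT) m := (1 <= m)%nat /\ B (Sn m (proj1_sig b)).
Definition kP z k := B (gn k z).

Lemma h_ex b : exists n, hP b n /\ forall m, (m < n)%nat -> ~ hP b m.
Proof. apply least_ex. destruct (fwd (proj1_sig b)) as [m [Hm Bm]]. exists m; split; auto; lia. Qed.
Lemma k_ex z : exists n, kP z n /\ forall m, (m < n)%nat -> ~ kP z m.
Proof. apply least_ex. apply bwd. Qed.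

Definition hf (b : BT) : nat := proj1_sig (constructive_indefinite_description _ (h_ex b)).
Lemma hspec b : hP b (hf b) /\ forall m, (m < hf b)%nat -> ~ hP b m.
Proof. unfold hf. destruct (constructive_indefinite_description _ _); simpl; auto. Qed.
Definition kf (z : Z) : nat := proj1_sig (constructive_indefinite_description _ (k_ex z)).
Lemma kspec z : kP z (kf z) /\ forall m, (m < kf z)%nat -> ~ kP z m.
Proof. unfold kf. destruct (constructive_indefinite_description _ _); simpl; auto. Qed.

Lemma hR : forall b, (N + 1 <= hf b <= 2 * N + 1)%nat.
Proof.
  intros b. destruct (hspec b) as [[H1 H2] H3]. split.
  - destruct (le_lt_dec (N + 1) (hf b)) as [l|l]; auto. exfalso.
    apply (HBs (proj1_sig b) (proj2_sig b) (hf b)); auto; lia.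
  - destruct (fwd (proj1_sig b)) as [m [Hm Bm]].
    destruct (le_lt_dec (hf b) (2 * N + 1)) as [l|l]; auto. exfalso.
    destruct (le_lt_dec (hf b) m) as [l2|l2]; [lia|]. apply (H3 m l2). split; auto; lia.
Qed.

Lemma h_iff b n : hf b = n <-> (hP b n /\ forall m, (m < n)%nat -> ~ hP b m).
Proof.
  split.
  - intros <-; apply hspec.
  - intros [H1 H2]. destruct (hspec b) as [H3 H4]. eapply least_unique; eauto.
Qed.
Lemma k_iff z n : kf z = n <-> (kP z n /\ forall m, (m < n)%nat -> ~ kP z m).
Proof.
  split.
  - intros <-; apply kspec.
  - intros [H1 H2]. destruct (kspec z) as [H3 H4]. eapply least_unique; eauto.
Qed.

Lemma sub_open (U : Z -> Prop) : open_set d U -> open_set (sub_dist d B) (fun b : BT => U (proj1_sig b)).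
Proof.
  intros HU b Hb. destruct (HU _ Hb) as [r [rp Hr]]. exists r; split; auto.
Qed.

Lemma h_level n : open_set (sub_dist d B) (fun b : BT => hf b = n).
Proof.
  eapply open_ext. { intros b; symmetry; apply h_iff. }
  apply (sub_open (fun z => ((1 <= n)%nat /\ B (Sn n z)) /\ forall m, (m < n)%nat -> ~ ((1 <= m)%nat /\ B (Sn m z)))).
  apply open_and. apply open_and. apply open_const.
  apply (open_preimage d d (Sn n) B); [apply Sn_cont | apply HBc].
  eapply open_ext.
  2:{ apply (open_forall_lt d n (fun m z => (1 <= m)%nat -> ~ B (Sn m z))).
      intros m. apply open_impl. intros _.
      apply (open_preimage d d (Sn m) (fun y => ~ B y)); [apply Sn_cont | apply HBc]. }
  intros z; simpl; split.
  - intros H m Hm [h1 h2]; apply (H m Hm h1 h2).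
  - intros H m Hm h1 h2; apply (H m Hm); auto.
Qed.

Lemma k_level n : open_set d (fun z => kf z = n).
Proof.
  eapply open_ext. { intros z; symmetry; apply k_iff. }
  unfold kP. apply open_and.
  apply (open_preimage d d (gn n) B); [apply gn_cont | apply HBc].
  apply (open_forall_lt d n (fun m z => ~ B (gn m z))).
  intros m. apply (open_preimage d d (gn m) (fun y => ~ B y)); [apply gn_cont | apply HBc].
Qed.

Definition hposf : forall b, (0 < hf b)%nat := range_pos hf N hR.

Definition TBf (b : BT) : BT := exist B (Sn (hf b) (proj1_sig b)) (proj2 (proj1 (hspec b))).

Definition bz (z : Z) : BT := exist B (gn (kf z) z) (proj1 (kspec z)).

Lemma kf_lt z : (kf z < hf (bz z))%nat.
Proof.
  destruct (le_lt_dec (hf (bz z)) (kf z)) as [l|l]; auto. exfalso.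
  destruct (hspec (bz z)) as [[H1 H2] _]. simpl in H2.
  rewrite Sg_le in H2 by auto.
  apply ((proj2 (kspec z)) (kf z - hf (bz z))%nat); [lia | exact H2].
Qed.

Definition phi (z : Z) : Qspace B hf :=
  exist (fun p : BT * nat => (snd p < hf (fst p))%nat) (bz z, kf z) (kf_lt z).

Definition psi (p : Qspace B hf) : Z := Sn (snd (proj1_sig p)) (proj1_sig (fst (proj1_sig p))).

Lemma k_tower (b : BT) j : (j < hf b)%nat -> kf (Sn j (proj1_sig b)) = j.
Proof.
  intros Hj. apply k_iff. unfold kP. split.
  - rewrite gS. apply proj2_sig.
  - intros m Hm HB. rewrite gS_le in HB by lia.
    apply ((proj2 (hspec b)) (j - m)%nat); [lia|]. split; auto; lia.
Qed.

Lemma phi_tower (b : BT) j H : phi (Sn j (proj1_sig b)) = exist _ (b, j) H.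
Proof.
  apply sig_eq. simpl. f_equal.
  - apply sig_eq. simpl. rewrite k_tower by auto. apply gS.
  - apply k_tower; auto.
Qed.

Lemma psi_phi z : psi (phi z) = z.
Proof. unfold psi, phi; simpl. apply Sg. Qed.

Lemma phi_psi p : phi (psi p) = p.
Proof. destruct p as [[b j] H]. unfold psi; simpl. apply phi_tower. Qed.

Lemma dnat_eq n : dnat n n = 0.
Proof. unfold dnat; destruct (Nat.eq_dec n n); [auto | congruence]. Qed.
Lemma dnat_ge0 m n : 0 <= dnat m n.
Proof. unfold dnat; destruct (Nat.eq_dec m n); lra. Qed.

Lemma phi_cont : continuous_map d (Qdist B hf d) phi.
Proof.
  intros z e ep. destruct (k_level (kf z) z eq_refl) as [r [rp Hr]].
  destruct (gn_cont (kf z) z e ep) as [de [dep Hde]].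
  exists (Rmin r de); split; [apply Rmin_glb_lt; auto|].
  intros z' Hz'. assert (Hk := Hr z' (Rlt_le_trans _ _ _ Hz' (Rmin_l _ _))).
  unfold Qdist, sub_dist; simpl. rewrite Hk, dnat_eq.
  specialize (Hde z' (Rlt_le_trans _ _ _ Hz' (Rmin_r _ _))). lra.
Qed.

Lemma psi_cont : continuous_map (Qdist B hf d) d psi.
Proof.
  intros [[b j] H] e ep. destruct (Sn_cont j (proj1_sig b) e ep) as [de [dep Hde]].
  exists (Rmin de 1); split; [apply Rmin_glb_lt; lra|].
  intros [[b' j'] H'] Hq. unfold Qdist, sub_dist in Hq; simpl in Hq.
  assert (Hm1 := Rmin_r de 1). assert (Hm2 := Rmin_l de 1).
  pose proof Hd as [H0 _].
  unfold psi; simpl.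
  destruct (Nat.eq_dec j j') as [<-|ne].
  - rewrite dnat_eq in Hq. apply Hde. lra.
  - exfalso. unfold dnat in Hq. destruct (Nat.eq_dec j j'); [congruence|].
    specialize (H0 (proj1_sig b) (proj1_sig b')). lra.
Qed.

Lemma TB_cont : continuous_map (sub_dist d B) (sub_dist d B) TBf.
Proof.
  intros b e ep. destruct (h_level (hf b) b eq_refl) as [r [rp Hr]].
  destruct (Sn_cont (hf b) (proj1_sig b) e ep) as [de [dep Hde]].
  exists (Rmin r de); split; [apply Rmin_glb_lt; auto|].
  intros b' Hb'. assert (Hk := Hr b' (Rlt_le_trans _ _ _ Hb' (Rmin_l _ _))).
  unfold sub_dist; simpl. rewrite Hk. apply Hde.
  exact (Rlt_le_trans _ _ _ Hb' (Rmin_r _ _)).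
Qed.

Lemma h_cont : continuous_map (sub_dist d B) dnat hf.
Proof.
  intros b e ep. destruct (h_level (hf b) b eq_refl) as [r [rp Hr]].
  exists r; split; auto. intros b' Hb'. rewrite (Hr b' Hb'), dnat_eq. auto.
Qed.

Definition TBi (b : BT) : BT := fst (proj1_sig (phi (g (proj1_sig b)))).

Lemma TBi_cont : continuous_map (sub_dist d B) (sub_dist d B) TBi.
Proof.
  unfold TBi.
  apply (cont_comp _ (Qdist B hf d) _ (fun b : BT => phi (g (proj1_sig b))) (fun p : Qspace B hf => fst (proj1_sig p))).
  - apply (cont_comp _ d _ (fun b : BT => g (proj1_sig b)) phi); [|apply phi_cont].
    apply (cont_comp _ d _ (fun b : BT => proj1_sig b) g); auto.
    intros b e ep; exists e; split; auto.
  - intros p e ep; exists e; split; auto. intros p' Hp. unfold Qdist in Hp.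
    pose proof (dnat_ge0 (snd (proj1_sig p)) (snd (proj1_sig p'))). lra.
Qed.

Lemma TBi_TB b : TBi (TBf b) = b.
Proof.
  unfold TBi.
  assert (H1 := proj1 (proj1 (hspec b))).
  change (proj1_sig (TBf b)) with (Sn (hf b) (proj1_sig b)).
  change (g (Sn (hf b) (proj1_sig b))) with (gn 1 (Sn (hf b) (proj1_sig b))).
  rewrite gS_le by lia.
  assert (H : (hf b - 1 < hf b)%nat) by lia.
  rewrite (phi_tower b _ H). reflexivity.
Qed.

Lemma TB_TBi b : TBf (TBi b) = b.
Proof.
  unfold TBi. set (z := g (proj1_sig b)). change (fst (proj1_sig (phi z))) with (bz z).
  assert (Ez : z = Sn (kf z) (proj1_sig (bz z))) by (symmetry; apply Sg).
  assert (Eb : proj1_sig b = Sn (S (kf z)) (proj1_sig (bz z))).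
  { change (Sn (S (kf z)) (proj1_sig (bz z))) with (T (Sn (kf z) (proj1_sig (bz z)))).
    rewrite <- Ez. unfold z. rewrite Hsg. auto. }
  assert (Hl := kf_lt z).
  assert (Heq : hf (bz z) = S (kf z)).
  { destruct (Nat.eq_dec (hf (bz z)) (S (kf z))) as [e|ne]; auto. exfalso.
    apply ((proj2 (hspec (bz z))) (S (kf z))); [lia|]. split; [lia|]. rewrite <- Eb. apply proj2_sig. }
  apply sig_eq. unfold TBf; simpl. rewrite Heq. symmetry; exact Eb.
Qed.

Lemma equiv z : phi (T z) = specialT B TBf hf hposf (phi z).
Proof.
  assert (Ez : T z = Sn (S (kf z)) (proj1_sig (bz z))).
  { change (Sn (S (kf z)) (proj1_sig (bz z))) with (T (Sn (kf z) (proj1_sig (bz z)))).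
    f_equal. symmetry; apply Sg. }
  unfold specialT at 1. unfold phi at 2. cbn beta iota.
  destruct (Compare_dec.lt_dec (S (kf z)) (hf (bz z))) as [l|nl].
  - rewrite Ez. apply phi_tower.
  - assert (Hl := kf_lt z).
    assert (E2 : T z = Sn 0 (proj1_sig (TBf (bz z)))).
    { rewrite Ez. replace (S (kf z)) with (hf (bz z)) by lia. reflexivity. }
    rewrite E2. apply phi_tower.
Qed.

End Tower.
End Dyn.
Theorem mainTheorem6
  (Z : Type) (d : Z -> Z -> R) (Hd : is_metric d) (Hc : compact_space d)
  (Hzd : zero_dimensional d) (S : Z -> Z) (HS : homeomorphism d d S)
  (Hap : aperiodic S) (N : nat) (HN : (0 < N)%nat) :
  exists (B : Z -> Prop) (TB : {x : Z | B x} -> {x : Z | B x})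
         (h : {x : Z | B x} -> nat)
         (hR : forall b, (N + 1 <= h b <= 2 * N + 1)%nat),
    clopen d B /\
    continuous_map (sub_dist d B) dnat h /\
    homeomorphism (sub_dist d B) (sub_dist d B) TB /\
    exists phi : Z -> Qspace B h,
      homeomorphism d (Qdist B h d) phi /\
      forall z, phi (S z) = specialT B TB h (range_pos h N hR) (phi z).
Proof.
  destruct HS as [HSc [g [Hgc [Hgs Hsg]]]].
  destruct (marker d Hd Hzd S g HSc Hgc Hgs Hap N HN Hc) as [B [HBc [HBs HBn]]].
  exists B, (TBf S g Hgs N HN B HBn), (hf S g Hgs N HN B HBn), (hR S g Hgs N HN B HBs HBn).
  split; [exact HBc|]. split; [|split].
  - eapply h_cont; eauto.
  - split. eapply TB_cont; eauto.
    exists (TBi S g Hgs Hsg N HN B HBn). split; [|split].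
    + eapply TBi_cont; eauto.
    + apply TBi_TB.
    + apply TB_TBi.
  - exists (phi S g Hgs Hsg N HN B HBn). split.
    + split. eapply phi_cont; eauto.
      exists (psi S g Hgs N HN B HBn). split; [|split].
      * eapply psi_cont; eauto.
      * apply psi_phi.
      * apply phi_psi.
    + intros z. apply (equiv S g Hgs Hsg N HN B HBs HBn).
Qed.
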